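(* For the fully labeled one-dimensional rearrangement problem (LOR) on $m$ cells with a uniformly random initial permutation $\pi$, the expected total cost $T_{\mathrm{LOR}}(m)$ of the rearrangement plan computed by SweepCyclesLOR satisfies $$T_{\mathrm{LOR}}(m)\approx (m+H_m-2)\,c_p+\frac{m^2c_t}{3},$$ where $H_m=\sum_{i=1}^m 1/i$ is the $m$-th harmonic number: the expected number of pick-n-swaps is $m+H_m-2$ and the expected end-effector travel is $(1+o(1))\,m^2/3$ as $m\to\infty$.
   Context: Setting (LOR). A row of $m$ cells $1,\dots,m$, cell $i$ located at the point $i$ on the real line. Each cell initially holds exactly one item; items carry distinct labels $1,\dots,m$. An instance is a permutation $\pi$ of $\{1,\dots,m\}$, where $\pi_i$ is the label of the item initially in cell $i$; the goal is that item $i$ ends in cell $i$. A robot end-effector can hold at most one item; it starts at cell $1$ holding nothing. A pick-n-swap operation at a cell $p$: if holding nothing, pick up the item in $p$; if holding an item and $p$ contains an item, exchange the two; if holding an item and $p$ is empty, put the held item into $p$. A plan is a sequence $P=(p_0,p_1,\dots,p_N)$ of cells ($p_0=$ cell $1$) visited in order with a pick-n-swap at each of $p_1,\dots,p_N$, followed by a return to $p_{N+1}:=p_0$. Its total cost is $J_T(P)=Nc_p+\sum_{i=0}^{N}|p_i-p_{i+1}|\,c_t$ with constants $c_p,c_t>0$. SweepCyclesLOR: while some cell $i$ holds an item with label $\ne i$, let $i$ be the smallest such cell; go to $i$ and pick up its item, say with label $g$; while $g\neq i$, go to cell $g$ and swap (item $g$ is placed in cell $g$ and the item previously in cell $g$,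 with label $g'$, becomes held; set $g:=g'$); finally go to cell $i$ and place the held item. When done, return to cell $1$. *)

(* Defs.v *)
From HB Require Import structures.
From mathcomp Require Import all_boot all_order all_algebra all_fingroup.
From mathcomp Require Import all_classical all_reals all_analysis.
Set Implicit Arguments. Unset Strict Implicit. Unset Printing Implicit Defensive.
Import Order.TTheory GRing.Theory Num.Theory.

(* Cells and labels are the natural numbers 1..m. A configuration is a map
   [arr : nat -> nat] giving the label of the item in each cell. *)

Definition cdist (a b : nat) : nat := (a - b) + (b - a).

Definition upd (arr : nat -> nat) (c v : nat) : nat -> nat :=
  fun x => if x == c then v else arr x.

(* The robot holds the item with label [g];
   [i] is the cell where the current cycle started (now empty).
   While g <> i: go to cell g and swap (item g goes to cell g, the item
   previously there becomes held).
   Returns the visited cells (one pick-n-swap each) and the new configuration.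
   [fuel] only guarantees termination; fuel >= m is enough. *)
Fixpoint cycle_walk (fuel i g : nat) (arr : nat -> nat) : seq nat * (nat -> nat) :=
  match fuel with
  | 0 => ([::], arr)
  | f.+1 =>
    if g == i then ([:: i], upd arr i i)
    else let: (p, a) := cycle_walk f i (arr g) (upd arr g g) in (g :: p, a)
  end.

Definition first_misplaced (m : nat) (arr : nat -> nat) : option nat :=
  let k := find (fun c => arr c != c) (iota 1 m) in
  if k < m then Some k.+1 else None.

Fixpoint sweep (fuel m : nat) (arr : nat -> nat) : seq nat :=
  match fuel with
  | 0 => [::]
  | f.+1 =>
    match first_misplaced m arr with
    | None => [::]
    | Some i =>
      let: (p, a) := cycle_walk m i (arr i) arr in i :: p ++ sweep f m a
    end
  end.

(* Initial configuration of an instance pi : 'S_m (0-based internally):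
   cell c in 1..m holds the item with label (pi (c-1)) + 1. *)
Definition init_arr (m : nat) (pi : 'S_m) (c : nat) : nat :=
  if c is c'.+1 then
    match @insub nat (fun x => x < m) 'I_m c' with
    | Some j => (pi j).+1
    | None => c
    end
  else 0.

(* The plan (p_1, ..., p_N) computed by SweepCyclesLOR (p_0 = cell 1 implicit). *)
Definition sweep_plan (m : nat) (pi : 'S_m) : seq nat :=
  sweep m m (init_arr pi).

Definition n_picks (P : seq nat) : nat := size P.

Fixpoint path_len (x : nat) (s : seq nat) : nat :=
  if s is y :: s' then cdist x y + path_len y s' else 0.
Definition travel (P : seq nat) : nat := path_len 1 (rcons P 1).

Definition total_cost (R : realType) (cp ct : R) (P : seq nat) : R :=
  (n_picks P)%:R * cp + (travel P)%:R * ct.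

Definition Eperm (R : realType) (m : nat) (X : 'S_m -> R) : R :=
  (\sum_(s : 'S_m) X s) / (#|{perm 'I_m}|)%:R.

Definition harmonic_number (R : realType) (m : nat) : R :=
  \sum_(1 <= i < m.+1) (i%:R)^-1.

(* Main.v *)
Require Import Defs.
From HB Require Import structures.
From mathcomp Require Import all_boot all_order all_algebra all_fingroup.
From mathcomp Require Import all_classical all_reals all_analysis.
Import Order.TTheory GRing.Theory Num.Theory.
Import numFieldNormedType.Exports.
From mathcomp Require Import zify ring lra.

Lemma cycle_walk_ext f i g a1 a2 : a1 =1 a2 ->
  (cycle_walk f i g a1).1 = (cycle_walk f i g a2).1 /\
  (cycle_walk f i g a1).2 =1 (cycle_walk f i g a2).2.
Proof.
elim: f g a1 a2 => [|f IH] g a1 a2 e /=; first by [].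
case: eqP => _.
  by split => // x /=; rewrite /upd e.
have e' : upd a1 g g =1 upd a2 g g by move=> x; rewrite /upd e.
have [h1 h2] := IH (a1 g) _ _ e'.
rewrite -(e g).
move: h1 h2; case: (cycle_walk f i (a1 g) (upd a1 g g)) => p1 b1.
by case: (cycle_walk f i (a1 g) (upd a2 g g)) => p2 b2 /= -> h2.
Qed.

Lemma iota_rcons1 k : 0 < k -> iota 1 k = iota 1 k.-1 ++ [:: k].
Proof. by case: k => // k _; have := iotaD 1 k 1; rewrite addn1 add1n. Qed.

Lemma traject_iota (T : Type) (f : T -> T) x n :
  traject f x n = [seq iter i f x | i <- iota 0 n].
Proof.
elim: n x => [|n IH] x //=; rewrite IH; congr (_ :: _).
have -> : iota 1 n = map (addn 1) (iota 0 n) by rewrite -iotaDl.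
rewrite -map_comp; apply: eq_map => i /=.
by rewrite add0n -iterS iterSr.
Qed.

Lemma first_misplaced_ext m a1 a2 : a1 =1 a2 ->
  first_misplaced m a1 = first_misplaced m a2.
Proof.
move=> e; rewrite /first_misplaced.
by rewrite (eq_find (a2 := fun c => a2 c != c)) // => c; rewrite e.
Qed.

Lemma sweep_ext f m a1 a2 : a1 =1 a2 -> sweep f m a1 = sweep f m a2.
Proof.
elim: f a1 a2 => [|f IH] a1 a2 e //=.
rewrite (first_misplaced_ext m _ _ e).
case: (first_misplaced m a2) => [i|] //.
have [h1 h2] := cycle_walk_ext m i (a1 i) _ _ e.
rewrite -(e i).
move: h1 h2; case: (cycle_walk m i (a1 i) a1) => p1 b1.
case: (cycle_walk m i (a1 i) a2) => p2 b2 /= -> h2.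
by rewrite (IH _ _ h2).
Qed.


Lemma path_len_cat x s1 s2 :
  path_len x (s1 ++ s2) = path_len x s1 + path_len (last x s1) s2.
Proof. by elim: s1 x => [|y s IH] x //=; rewrite IH addnA. Qed.

Lemma path_len_map (g : nat -> nat) a n :
  path_len (g a) [seq g j | j <- iota a.+1 n] =
  \sum_(a <= j < a + n) cdist (g j) (g j.+1).
Proof.
elim: n a => [|n IH] a /=; first by rewrite addn0 big_geq.
rewrite IH [RHS]big_ltn; last by rewrite addnS ltnS leq_addr.
by rewrite addSnnS.
Qed.

Section Alg.
Variables (m : nat) (s : {perm 'I_m}).

Definition arrS (S : {set 'I_m}) (c : nat) : nat :=
  if c is c'.+1 then
    match @insub nat (fun x => x < m) 'I_m c' with
    | Some j => if j \in S then c else (s j).+1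
    | None => c end
  else 0.

Arguments arrS : simpl never.

Lemma arrS_ord S (x : 'I_m) : arrS S (val x).+1 = if x \in S then (val x).+1 else (s x).+1.
Proof. by rewrite /arrS valK. Qed.

Lemma ord_or_out c : (exists y : 'I_m, c = (val y).+1) \/ (forall S, arrS S c = c).
Proof.
case: c => [|c]; first by right.
case: (ltnP c m) => h; first by left; exists (Ordinal h).
by right => S; rewrite /arrS insubN // -leqNgt.
Qed.

Lemma init_arrS : init_arr s =1 arrS finset.set0.
Proof. by case=> [|c] //=; rewrite /arrS; case: insub => //= j; rewrite inE. Qed.

Definition closed (S : {set 'I_m}) := forall x, (s x \in S) = (x \in S).

Section Walk.
Variables (S : {set 'I_m}) (i0 : 'I_m).
Hypothesis cS : closed S.
Hypothesis i0S : i0 \notin S.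
Let L := #|porbit s i0|.
Let x j := iter j s i0.

Lemma x_L : x L = i0.
Proof. exact: iter_porbit. Qed.

Lemma x_inj j1 j2 : j1 < L -> j2 < L -> x j1 = x j2 -> j1 = j2.
Proof.
move=> h1 h2 e.
have U := uniq_traject_porbit s i0.
apply/eqP; rewrite -(nth_uniq i0 _ _ U) ?size_traject //.
by rewrite !nth_traject //; apply/eqP; exact: e.
Qed.

Lemma x_mem j : x j \in porbit s i0.
Proof. by rewrite /x -permX mem_porbit. Qed.

Lemma mem_x y : y \in porbit s i0 -> exists2 j, j < L & y = x j.
Proof. by rewrite porbit_traject => /trajectP. Qed.

Lemma x_notS j : x j \notin S.
Proof. by elim: j => [|j IH] //=; rewrite /x /= cS. Qed.

Lemma L_gt0 : 0 < L.
Proof. by rewrite lt0n card_porbit_neq0. Qed.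

Definition Sk k := S :|: [set y | has (fun j => y == x j) (iota 1 k.-1)].

Lemma Sk1 : Sk 1 = S.
Proof. by apply/finset.setP => y; rewrite !inE /= orbF. Qed.

Lemma in_Sk k y : (y \in Sk k) = (y \in S) || has (fun j => y == x j) (iota 1 k.-1).
Proof. by rewrite !inE. Qed.

Lemma walk d : forall k f, k + d = L -> 0 < k -> d < f ->
  (cycle_walk f (val i0).+1 (val (x k)).+1 (arrS (Sk k))).1
     = [seq (val (x j)).+1 | j <- iota k d.+1] /\
  (cycle_walk f (val i0).+1 (val (x k)).+1 (arrS (Sk k))).2
     =1 arrS (S :|: porbit s i0).
Proof.
elim: d => [|d IH] k f hk k0 df; case: f df => [|f] df //=.
  rewrite addn0 in hk; rewrite hk x_L eqxx; split => // c.
  case: (ord_or_out c) => [[y ->]|h]; last by rewrite /upd /= !h; case: (c =P _).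
  rewrite /upd /= eqSS arrS_ord arrS_ord.
  case: eqP => [/val_inj -> | ne]; first by rewrite !inE porbit_id orbT.
  rewrite in_Sk !inE; congr (if _ then _ else _); congr (_ || _).
  apply/hasP/idP => [[j _ /eqP ->]|]; first exact: x_mem.
  case/mem_x => j jL e; exists j; last by rewrite e.
  rewrite mem_iota; case: j e jL => [|j] e jL.
    by case: ne; rewrite e.
  by rewrite add1n -subn1 /=; lia.
have kL : k < L by lia.
have xk : x k != i0.
  apply/eqP => e; have := @x_inj k 0 kL L_gt0 e; lia.
rewrite eqSS (inj_eq val_inj) (negbTE xk).
have xkS : x k \notin Sk k.
  rewrite in_Sk negb_or x_notS /=; apply/hasPn => j; rewrite mem_iota => hj.
  apply/eqP => e; have := @x_inj k j kL ltac:(lia) e; lia.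
rewrite arrS_ord (negbTE xkS).
have e : upd (arrS (Sk k)) (val (x k)).+1 (val (x k)).+1 =1 arrS (Sk k.+1).
  move=> c; case: (ord_or_out c) => [[y ->]|h]; last first.
    by rewrite /upd !h; case: (c =P _).
  rewrite /upd /= eqSS arrS_ord arrS_ord.
  case: eqP => [/val_inj -> | ne].
    by rewrite in_Sk; apply/esym; rewrite ifT //; apply/orP; right; apply/hasP; exists k;
      rewrite ?eqxx // mem_iota; lia.
  rewrite !in_Sk; congr (if _ then _ else _); congr (_ || _).
  have -> : iota 1 k.+1.-1 = iota 1 k.-1 ++ [:: k].
    exact: iota_rcons1.
  rewrite has_cat /= orbF; case: eqP => [ey|]; last by rewrite orbF.
  by case: ne; rewrite ey.
have [h1 h2] := cycle_walk_ext f (val i0).+1 ((val (s (x k))).+1) _ _ e.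
have -> : s (x k) = x k.+1 by [].
move: h1 h2; rewrite -/(x k.+1).
case: (cycle_walk f (val i0).+1 (val (x k.+1)).+1 (upd _ _ _)) => p1 b1 /= -> h2.
have [IH1 IH2] := IH k.+1 f ltac:(lia) ltac:(lia) ltac:(lia).
split; first by rewrite IH1.
by move=> c; rewrite h2 IH2.
Qed.

End Walk.

Definition misp (S : {set 'I_m}) (z : 'I_m) := (z \notin S) && (s z != z).
Definition isrep (z : 'I_m) := [forall y, (y \in porbit s z) ==> (z <= y)].
Definition NF S := #|[set z | misp S z]|.
Definition NR S := #|[set z | misp S z && isrep z]|.
Definition DS (S : {set 'I_m}) := \sum_(z | z \notin S) cdist z (s z).

Lemma arrS_neq S (y : 'I_m) : (arrS S (val y).+1 != (val y).+1) = misp S y.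
Proof.
rewrite arrS_ord /misp; case: ifP => /= h; first by rewrite eqxx.
by rewrite eqSS (inj_eq val_inj).
Qed.

Lemma fm_none S : (forall z, ~~ misp S z) -> first_misplaced m (arrS S) = None.
Proof.
move=> h; rewrite /first_misplaced hasNfind ?size_iota ?ltnn //.
apply/hasPn => c; rewrite mem_iota => /andP [c1 c2].
have cm : c.-1 < m by lia.
have -> : c = (val (Ordinal cm)).+1 by rewrite /= prednK.
by rewrite arrS_neq h.
Qed.

Lemma fm_some S (i0 : 'I_m) : misp S i0 -> (forall z, misp S z -> i0 <= z) ->
  first_misplaced m (arrS S) = Some (val i0).+1.
Proof.
move=> hi hmin; rewrite /first_misplaced.
rewrite (_ : iota 1 m = iota 1 i0 ++ iota (1 + i0) (m - i0)); last first.
  by rewrite -iotaD subnKC // ltnW.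
rewrite find_cat.
have -> : has (fun c => arrS S c != c) (iota 1 i0) = false.
  apply/negbTE/hasPn => c; rewrite mem_iota => /andP [c1 c2].
  have cm : c.-1 < m by have := ltn_ord i0; lia.
  have -> : c = (val (Ordinal cm)).+1 by rewrite /= prednK.
  rewrite arrS_neq; apply/negP => /hmin /=; lia.
have -> : m - i0 = (m - i0).-1.+1 by rewrite prednK // subn_gt0.
by rewrite /= add1n arrS_neq hi size_iota addn0 ltn_ord.
Qed.

Lemma fixed_orbit z y : s z = z -> y \in porbit s z -> y = z.
Proof.
move=> hz /porbitP [i ->]; rewrite permX.
by elim: i => //= i ->.
Qed.

Lemma porbit_s z : porbit s (s z) = porbit s z.
Proof. by have := porbit_perm s 1 z; rewrite expg1. Qed.

Lemma cdistSS a b : cdist a.+1 b.+1 = cdist a b.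
Proof. by rewrite /cdist !subSS. Qed.

Lemma sweep_none f S : (forall z, ~~ misp S z) -> sweep f m (arrS S) = [::].
Proof. by case: f => [|f] h //=; rewrite fm_none. Qed.

Lemma orbit_misp S i0 : closed S -> misp S i0 -> forall y, y \in porbit s i0 -> misp S y.
Proof.
move=> cS /andP [i0S si0] y hy; rewrite /misp; apply/andP; split.
  by case/porbitP: (hy) => j ->; rewrite permX; exact: (@x_notS S i0 cS i0S).
apply/eqP => e.
have e2 : i0 = y by apply: fixed_orbit e _; rewrite porbit_sym.
by move: si0; rewrite e2 e eqxx.
Qed.

Lemma closedU S i0 : closed S -> closed (S :|: porbit s i0).
Proof.
move=> cS z; rewrite !inE cS; congr (_ || _).
by rewrite porbit_sym porbit_s porbit_sym.
Qed.

Section Round.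
Variables (S : {set 'I_m}) (i0 : 'I_m).
Hypothesis cS : closed S.
Hypothesis hi0 : misp S i0.
Hypothesis hmin : forall z, misp S z -> i0 <= z.
Let O := porbit s i0.
Let S' := S :|: O.

Lemma NF_round : NF S = NF S' + #|O|.
Proof.
rewrite /NF -(finset.cardsID O [set z | misp S z]) addnC; congr (_ + _).
  apply: eq_card => z; rewrite !inE /misp !inE negb_or.
  by case: (z \in S); case: (z \in O).
rewrite (finset.setIidPr _) //; apply/fintype.subsetP => z hz; rewrite inE.
exact: (@orbit_misp S i0 cS hi0 z hz).
Qed.

Lemma isrep_i0 : isrep i0.
Proof.
apply/forallP => y; apply/implyP => hy; apply: hmin.
exact: orbit_misp hy.
Qed.

Lemma NR_round : NR S = NR S' + 1.
Proof.
rewrite /NR -(finset.cardsID O [set z | misp S z && isrep z]) addnC; congr (_ + _).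
  apply: eq_card => z; rewrite !inE /misp !inE negb_or.
  by case: (z \in S); case: (z \in O).
rewrite -(finset.cards1 i0); apply: eq_card => z; rewrite !inE.
apply/idP/idP => [/andP [/andP [hz rz] zO]|/eqP ->].
  have h1 := hmin _ hz.
  have h2 : z <= i0 by move/forallP: rz => /(_ i0) /implyP; apply; rewrite porbit_sym.
  by apply/eqP/val_inj/eqP; rewrite eqn_leq h1 h2.
by rewrite hi0 isrep_i0 porbit_id.
Qed.

Definition DO := \sum_(z in O) cdist z (s z).

Lemma DS_round : DS S = DO + DS S'.
Proof.
rewrite /DS (bigID (fun z => z \in O)) /=; congr (_ + _).
  apply: eq_bigl => z; case: (boolP (z \in O)) => hz; last by rewrite andbF.
  by have /andP [-> _] := @orbit_misp S i0 cS hi0 z hz.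
by apply: eq_bigl => z; rewrite !inE negb_or.
Qed.

Lemma path_round :
  path_len (val i0).+1 [seq (val (iter j s i0)).+1 | j <- iota 1 #|O|] = DO.
Proof.
have := path_len_map (fun j => (val (iter j s i0)).+1) 0 #|O|; rewrite /= => ->.
under eq_bigr => j _ do rewrite cdistSS.
rewrite /index_iota subn0 add0n.
rewrite -(big_map (fun j => iter j s i0) xpredT (fun z => cdist (val z) (val (s z)))).
rewrite -traject_iota big_uniq ?uniq_traject_porbit //.
by apply: eq_bigl => z; rewrite -porbit_traject.
Qed.

Lemma last_round :
  last (val i0).+1 [seq (val (iter j s i0)).+1 | j <- iota 1 #|O|] = (val i0).+1.
Proof.
have -> : (val i0).+1 = (fun j => (val (iter j s i0)).+1) 0 by [].
rewrite last_map (@iota_rcons1 _ (L_gt0 i0)) last_cat /=.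
by rewrite iter_porbit.
Qed.

End Round.

Definition SPEC f S :=
  size (sweep f m (arrS S)) = NF S + NR S /\
  forall y, DS S <= path_len y (rcons (sweep f m (arrS S)) 1) /\
   (0 < y <= m -> (forall z, misp S z -> y <= (val z).+1) ->
    path_len y (rcons (sweep f m (arrS S)) 1) <= DS S + 2 * m - y).

Lemma none_case f S : (forall z, ~~ misp S z) -> SPEC f S.
Proof.
move=> hn; rewrite /SPEC sweep_none //.
have e0 : forall P : pred 'I_m, (forall z, ~~ P z) -> #|[set z | P z]| = 0.
  by move=> P hP; apply/eqP; rewrite finset.cards_eq0; apply/eqP/finset.setP => z; rewrite !inE (negbTE (hP z)).
rewrite /NF /NR (e0 _ hn) ?(e0 (fun z => misp S z && isrep z)) //; last first.
  by move=> z; rewrite (negbTE (hn z)).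
have -> : DS S = 0.
  rewrite /DS big1 // => z hz; have := hn z; rewrite /misp hz /= negbK => /eqP ->.
  by rewrite /cdist subnn.
split => // y; split => // /andP [y0 ym] _ /=; rewrite /cdist; lia.
Qed.

Lemma sweep_main f : forall S, closed S -> NR S <= f -> SPEC f S.
Proof.
elim: f => [|f IH] S cS hf; (case: (pickP (misp S)) => [z hz|hn]; last first).
- by apply: none_case => z; rewrite hn.
- case: (arg_minnP (fun z : 'I_m => val z) hz) => i0 hi0 hmin.
  by move: hf; rewrite (@NR_round S i0 cS hi0 hmin) addn1.
- by apply: none_case => z; rewrite hn.
have [i0 hi0 hmin] : exists2 i0 : 'I_m, misp S i0 & forall j : 'I_m, misp S j -> i0 <= j.
  by case: (arg_minnP (fun z : 'I_m => val z) hz) => i0 hi0 hmin; exists i0.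
have hi0S : i0 \notin S by case/andP: hi0.
rewrite /SPEC /= (@fm_some S i0 hi0 hmin) arrS_ord (negbTE hi0S).
have L0 := L_gt0 i0.
have Lm : #|porbit s i0| <= m by have := max_card (mem (porbit s i0)); rewrite card_ord.
have W := @walk S i0 cS hi0S (#|porbit s i0|.-1) 1 m ltac:(by rewrite add1n prednK) isT
   ltac:(by rewrite prednK).
rewrite Sk1 prednK // in W.
case: W => W1 W2; move: W1 W2.
case: (cycle_walk m (val i0).+1 (val (s i0)).+1 (arrS S)) => p a /= -> W2.
rewrite (sweep_ext f m _ _ W2).
have [IHs IHp] := IH (S :|: porbit s i0) (@closedU S i0 cS)
   ltac:(by move: hf; rewrite (@NR_round S i0 cS hi0 hmin) addn1).
split.
  rewrite /= size_cat size_map size_iota IHs (@NF_round S i0 cS hi0) (@NR_round S i0 cS hi0 hmin).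
  set a1 := NF _; set b1 := NR _; set c1 := #|_|; lia.
move=> y; rewrite /= rcons_cat path_len_cat last_round path_round.
have [lo up] := IHp (val i0).+1.
rewrite (@DS_round S i0 cS hi0).
set P := path_len _ _ in lo up *; set D1 := DS _ in lo up *; set D0 := DO _.
split; first lia.
move=> /andP [y0 ym] hy.
have yi := hy i0 hi0.
have up' : P <= D1 + 2 * m - i0.+1.
  apply: up; first by rewrite ltn_ord.
  move=> z' /andP [hz1 hz2]; rewrite ltnS; apply: hmin.
  by rewrite /misp hz2 andbT; move: hz1; rewrite !inE negb_or => /andP [].
rewrite /cdist; have := ltn_ord i0; lia.
Qed.

End Alg.

Arguments misp {m}. Arguments isrep {m}. Arguments NF {m}. Arguments NR {m}.
Arguments DS {m}. Arguments fixed_orbit {m s z y}. Arguments sweep_main {m s}.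
Arguments init_arrS {m}. Arguments arrS {m}.

Section Plan.
Variables (m : nat) (s : {perm 'I_m}).

Definition nfix := #|[set z : 'I_m | s z == z]|.

Lemma porbits_reps : #|porbits s| = #|[set z | isrep s z]|.
Proof.
have -> : porbits s = porbit s @: [set z | isrep s z].
  apply/finset.setP => O; apply/finset.imsetP/finset.imsetP => [[x _ ->]|[r _ ->]]; last by exists r.
  case: (arg_minnP (fun z : 'I_m => val z) (porbit_id s x)) => r hr hmin.
  have e : porbit s r = porbit s x by apply/eqP; rewrite eq_porbit_mem.
  exists r => //.
  rewrite inE; apply/forallP => y; apply/implyP => hy; apply: hmin.
  by move: hy; rewrite e.
rewrite card_in_imset // => r1 r2; rewrite !inE => h1 h2 e.
have i1 : r1 \in porbit s r2 by rewrite -e porbit_id.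
have i2 : r2 \in porbit s r1 by rewrite e porbit_id.
move/forallP: h1 => /(_ r2) /implyP /(_ i2) l1.
move/forallP: h2 => /(_ r1) /implyP /(_ i1) l2.
by apply/val_inj/eqP; rewrite eqn_leq l1 l2.
Qed.

Lemma NF0 : NF s finset.set0 + nfix = m.
Proof.
rewrite /NF /nfix -finset.cardsUI.
have -> : [set z | misp s finset.set0 z] :&: [set z | s z == z] = finset.set0.
  by apply/finset.setP => z; rewrite !inE /misp inE /=; case: eqP.
have -> : [set z | misp s finset.set0 z] :|: [set z | s z == z] = finset.setT.
  by apply/finset.setP => z; rewrite !inE /misp inE /=; case: eqP.
by rewrite finset.cards0 addn0 finset.cardsT card_ord.
Qed.

Lemma NR0 : NR s finset.set0 + nfix = #|porbits s|.
Proof.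
rewrite porbits_reps /NR /nfix -(finset.cardsID [set z | s z == z] [set z | isrep s z]) addnC.
congr (_ + _); last first.
  by apply: eq_card => z; rewrite !inE /misp !inE andbC.
apply: eq_card => z; rewrite !inE; case: (boolP (s z == z)) => /= hz; rewrite ?andbF ?andbT //.
apply/esym/forallP => y; apply/implyP => hy; by rewrite (fixed_orbit (eqP hz) hy).
Qed.

Lemma plan_picks : size (sweep_plan s) + 2 * nfix = m + #|porbits s|.
Proof.
have [h _] := @sweep_main m s m finset.set0 (fun z => ltac:(by rewrite !inE))
  ltac:(by have := max_card (mem [set z | misp s finset.set0 z && isrep s z]); rewrite card_ord).
rewrite /sweep_plan (sweep_ext m m _ _ (init_arrS s)) h.
have := NF0; have := NR0; lia.
Qed.

Definition Dist := \sum_(z : 'I_m) cdist z (s z).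

Lemma plan_travel : 0 < m -> Dist <= travel (sweep_plan s) <= Dist + 2 * m.
Proof.
move=> m0.
have [_ h] := @sweep_main m s m finset.set0 (fun z => ltac:(by rewrite !inE))
  ltac:(by have := max_card (mem [set z | misp s finset.set0 z && isrep s z]); rewrite card_ord).
have [lo up] := h 1.
have eD : DS s finset.set0 = Dist by apply: eq_bigl => z; rewrite inE.
rewrite /travel /sweep_plan (sweep_ext m m _ _ (init_arrS s)) -eD.
have := up ltac:(by rewrite m0) (fun z _ => isT).
move: lo; set P := path_len _ _; set D := DS _ _; lia.
Qed.

End Plan.

Lemma porbits_mul_tperm_r (T : finType) (r : {perm T}) x y :
  #|porbits (r * tperm x y)%g| + (x \notin porbit r y).*2 = #|porbits r| + (x != y).
Proof.
rewrite -(porbitsV (r * tperm x y)%g) invgM tpermV -(porbitsV r) -porbitV.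
exact: porbits_mul_tperm.
Qed.

Section Count.
Variable m : nat.

Lemma fiber_eq (x y y' : 'I_m) :
  #|[set s : {perm 'I_m} | s x == y]| <= #|[set s : {perm 'I_m} | s x == y']|.
Proof.
rewrite -(card_imset _ (mulIg (tperm y y'))).
apply: subset_leq_card; apply/fintype.subsetP => _ /finset.imsetP [s hs ->].
by rewrite !inE permM; move: hs; rewrite inE => /eqP ->; rewrite tpermL.
Qed.

Lemma fiber_card (x y : 'I_m) : #|[set s : {perm 'I_m} | s x == y]| * m = m`!.
Proof.
have e : forall y', #|[set s : {perm 'I_m} | s x == y']| = #|[set s : {perm 'I_m} | s x == y]|.
  by move=> y'; apply/eqP; rewrite eqn_leq !fiber_eq.
have -> : m`! = \sum_(y' : 'I_m) #|[set s : {perm 'I_m} | s x == y']|.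
  rewrite -card_Sn -sum1_card (partition_big (fun s : {perm 'I_m} => s x) predT) //=.
  apply: eq_bigr => y' _; rewrite -sum1_card; apply: eq_bigl => s; rewrite inE.
  by [].
rewrite (eq_bigr (fun _ => #|[set s : {perm 'I_m} | s x == y]|)) //.
by rewrite sum_nat_const card_ord mulnC.
Qed.

Lemma sum_perm_at (G : 'I_m -> nat) x :
  (\sum_(s : {perm 'I_m}) G (s x)) * m = m`! * \sum_y G y.
Proof.
rewrite (partition_big (fun s : {perm 'I_m} => s x) predT) //= big_distrl big_distrr /=.
apply: eq_bigr => y _.
rewrite (eq_bigr (fun _ => G y)); last by move=> s /= /eqP ->.
rewrite sum_nat_const -(fiber_card x y) mulnAC; congr (_ * _ * _).
by apply: eq_card => s; rewrite !inE.
Qed.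

End Count.

Section Count2.
Variable m : nat.
Hypothesis m0 : 0 < m.

Lemma sum_nfix : \sum_(s : {perm 'I_m}) #|[set z : 'I_m | s z == z]| = m`!.
Proof.
apply/eqP; rewrite -(eqn_pmul2r m0); apply/eqP.
rewrite (eq_bigr (fun s : {perm 'I_m} => \sum_(z : 'I_m) (s z == z))); last first.
  by move=> s _; rewrite -sum1_card big_mkcond /=; apply: eq_bigr => z _; rewrite inE; case: (_ == _).
rewrite exchange_big big_distrl /=.
rewrite (eq_bigr (fun z : 'I_m => m`! * \sum_(y : 'I_m) (y == z))); last first.
  by move=> z _; rewrite (@sum_perm_at m (fun y => nat_of_bool (y == z)) z).
rewrite -big_distrr /=; congr (_ * _).
rewrite (eq_bigr (fun _ => 1)) ?sum_nat_const ?card_ord ?muln1 // => z _.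
by rewrite (bigD1 z) //= eqxx big1 // => y /negbTE ->.
Qed.

Lemma sum_dist : (\sum_(s : {perm 'I_m}) \sum_(z : 'I_m) cdist z (s z)) * m
   = m`! * \sum_(z : 'I_m) \sum_(y : 'I_m) cdist z y.
Proof.
rewrite exchange_big big_distrl big_distrr /=; apply: eq_bigr => z _.
exact: (@sum_perm_at m (fun y : 'I_m => cdist z y) z).
Qed.

End Count2.

Lemma cdist_tri n : 2 * \sum_(0 <= x < n) cdist x n = n * n.+1.
Proof.
elim: n => [|n IH]; first by rewrite big_geq.
rewrite big_nat_recr //=.
rewrite (eq_big_nat _ _ (F2 := fun x => cdist x n + 1)); last first.
  by move=> x /andP [_ h]; rewrite /cdist; lia.
rewrite big_split /= sum_nat_const_nat subn0 !mulnDr IH /cdist; lia.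
Qed.

Lemma cdist_sum n : 3 * \sum_(0 <= x < n) \sum_(0 <= y < n) cdist x y = n.-1 * n * n.+1.
Proof.
elim: n => [|n IH]; first by rewrite big_geq.
rewrite big_nat_recr //=.
rewrite (eq_big_nat _ _ (F2 := fun x => \sum_(0 <= y < n) cdist x y + cdist x n)); last first.
  by move=> x _; rewrite big_nat_recr.
rewrite big_split /= big_nat_recr //= /cdist subnn.
have h1 := cdist_tri n.
have h2 : \sum_(0 <= y < n) cdist n y = \sum_(0 <= y < n) cdist y n.
  by apply: eq_bigr => y _; rewrite /cdist addnC.
rewrite /cdist in h1 h2; rewrite h2.
set A := \sum_(0 <= i < n) \sum_(0 <= j < n) _ in IH *.
set B := \sum_(0 <= i < n) _ in h1 *.
clearbody A B; clear h2; case: n IH h1 => [|n] IH h1 /=; nia.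
Qed.

Section Cyc.
Variable m : nat.

Definition Skp k := [pred s : {perm 'I_m} | [forall x : 'I_m, (k <= x) ==> (s x == x)]].

Lemma sum_ord_lt k c : k <= m -> \sum_(j : 'I_m | j < k) c = k * c.
Proof.
move=> km; rewrite sum_nat_const; congr (_ * _).
have winj : injective (widen_ord km) by move=> a b /(congr1 val) /= /val_inj.
rewrite -[RHS](card_ord k) -(card_imset _ winj); apply: eq_card => j.
apply/idP/finset.imsetP => [h|[i _ ->]] //=.
  by exists (Ordinal h) => //; apply: val_inj.
by rewrite unfold_in /=; apply/eqP; have := ltn_ord i; lia.
Qed.

Lemma Sk_split k (hk : k < m) (F : {perm 'I_m} -> nat) :
  \sum_(s | Skp k.+1 s) F s =
  \sum_(j : 'I_m | j < k.+1) \sum_(r | Skp k r) F (r * tperm (Ordinal hk) j)%g.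
Proof.
set kk := Ordinal hk.
rewrite (partition_big (fun s : {perm 'I_m} => s kk) (fun j : 'I_m => j < k.+1)); last first.
  move=> s /forallP hs; rewrite ltnNge; apply/negP => h.
  have := hs (s kk); rewrite h /= => /eqP /perm_inj e.
  by move: h; rewrite e /= ltnn.
apply: eq_bigr => j hj.
rewrite (reindex_inj (mulIg (tperm kk j))) /=.
apply: eq_bigl => r.
apply/andP/forallP => [[/forallP h1 /eqP h2] x | h].
  apply/implyP => kx; case: (eqVneq x kk) => [-> | xk].
    move: h2; rewrite permM => /(congr1 (tperm kk j)); rewrite tpermK tpermR => ->.
    by [].
  have kx' : k < x by move: xk; rewrite -(inj_eq val_inj) /=; lia.
  have := h1 x; rewrite kx' /= permM => /eqP /(congr1 (tperm kk j)); rewrite tpermK => ->.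
  rewrite tpermD //; first by rewrite eq_sym.
  by apply/eqP => e; move: hj kx'; rewrite e; lia.
split.
  apply/forallP => x; apply/implyP => kx; rewrite permM.
  have := h x; rewrite ltnW //= => /eqP ->.
  rewrite tpermD //.
    by apply/eqP => e; move: kx; rewrite -e /=; lia.
  by apply/eqP => e; move: kx hj; rewrite -e; lia.
by rewrite permM; have := h kk; rewrite /= leqnn /= => /eqP ->; rewrite tpermL.
Qed.

Definition Ns k := #|Skp k|.
Definition Cs k := \sum_(s | Skp k s) #|porbits s|.

Lemma N_rec k (hk : k < m) : Ns k.+1 = k.+1 * Ns k.
Proof.
by rewrite /Ns -!sum1_card (@Sk_split k hk) sum_ord_lt.
Qed.

Lemma C_rec k (hk : k < m) : Cs k.+1 + k * Ns k = k.+1 * Cs k.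
Proof.
rewrite /Cs (@Sk_split k hk) (bigD1 (Ordinal hk)) //=.
rewrite tperm1 (eq_bigr (fun r => #|porbits r|)); last by move=> r _; rewrite mulg1.
rewrite (eq_bigl (fun j : 'I_m => j < k)); last first.
  by move=> j; rewrite -(inj_eq val_inj) /=; rewrite ltnS ltn_neqAle andbC.
have e : \sum_(j : 'I_m | j < k) \sum_(r | Skp k r) #|porbits (r * tperm (Ordinal hk) j)%g|
         + k * Ns k = k * \sum_(r | Skp k r) #|porbits r|.
  rewrite /Ns -sum1_card -(@sum_ord_lt k _ (ltnW hk)) -(@sum_ord_lt k _ (ltnW hk)) -big_split /=.
  apply: eq_bigr => j hj.
  rewrite (eq_bigl (fun r => Skp k r)) // -big_split /=; apply: eq_bigr => r hr.
  have := @porbits_mul_tperm_r _ r (Ordinal hk) j.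
  have -> : Ordinal hk \notin porbit r j.
    apply/negP; rewrite porbit_sym => hj'.
    have rk : r (Ordinal hk) = Ordinal hk by move/forallP: hr => /(_ (Ordinal hk)) /= /implyP; rewrite leqnn => /(_ isT) /eqP.
    have := fixed_orbit rk hj'; move=> ej; move: hj; rewrite ej /= ltnn.
    by [].
  have -> : Ordinal hk != j by apply/eqP => ej; move: hj; rewrite -ej /= ltnn.
  move=> /=; set u := #|porbits _|; set v := #|porbits _|; lia.
by rewrite -addnA e mulSn.
Qed.

Lemma porbit1 (x : 'I_m) : porbit 1 x = [set x].
Proof.
apply/finset.setP => y; rewrite inE; apply/idP/eqP => [h| ->]; last exact: porbit_id.
exact: fixed_orbit (perm1 x) h.
Qed.

Lemma C0 : Cs 0 = m /\ Ns 0 = 1.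
Proof.
have e : Skp 0 =1 pred1 1%g.
  move=> s /=; apply/forallP/eqP => [h|-> x]; last by rewrite perm1 eqxx.
  by apply/permP => x; rewrite perm1; apply/eqP; exact: h x.
split.
  rewrite /Cs (eq_bigl _ _ e) big_pred1_eq /porbits.
  rewrite card_imset ?card_ord // => x y; rewrite !porbit1; exact: finset.set1_inj.
by rewrite /Ns (eq_card e) card1.
Qed.

Lemma Cm : Cs m = \sum_(s : {perm 'I_m}) #|porbits s|.
Proof. by apply: eq_bigl => s; apply/forallP => x; rewrite leqNgt ltn_ord. Qed.

End Cyc.

Arguments Cs {m}. Arguments Ns {m}. Arguments Dist {m}.

Section Real.
Variable R : realType.
Local Open Scope ring_scope.

Lemma harmonicS k : harmonic_number R k.+1 = harmonic_number R k + (k.+1)%:R^-1.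
Proof. by rewrite /harmonic_number big_nat_recr. Qed.

Lemma Cs_closed m k : (k <= m)%N ->
  (@Cs m k)%:R = (k`!)%:R * (m%:R - k%:R + harmonic_number R k) :> R /\ @Ns m k = k`!.
Proof.
elim: k => [|k IH] km.
  have [c0 n0] := C0 m.
  by rewrite c0 n0 /harmonic_number big_geq // subr0 addr0 fact0 mul1r.
have [IH1 IH2] := IH (ltnW km).
rewrite factS; split; last by rewrite (@N_rec m k km) IH2.
have e := @C_rec m k km; move/(congr1 (fun n => n%:R : R)): e.
rewrite natrD !natrM IH2 IH1 => e.
have -> : (@Cs m k.+1)%:R = k.+1%:R * ((k`!)%:R * (m%:R - k%:R + harmonic_number R k)) - k%:R * (k`!)%:R :> R.
  by move: e; lra.
rewrite harmonicS -[(k.+1)%:R]/((1 + k)%:R) natrD mulr1n.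
have h : (1 + k%:R : R) != 0.
  by rewrite -[1 + _]mulr1n -[1 *+ 1 + _]natrD pnatr_eq0 add1n.
field.
exact: h.
Qed.


Lemma sum_picks m : (0 < m)%N ->
  (\sum_(s : {perm 'I_m}) size (sweep_plan s) + 2 * m`! = m * m`! + \sum_(s : {perm 'I_m}) #|porbits s|)%N.
Proof.
move=> m0; rewrite -{1}(@sum_nfix m m0) big_distrr /= -big_split /=.
rewrite (eq_bigr (fun s => m + #|porbits s|))%N; last by move=> s _; exact: plan_picks.
rewrite big_split /= sum_nat_const (_ : #|_| = m`!) ?(mulnC m) //.
by rewrite -card_Sn; apply: eq_card.
Qed.

Lemma EP_eq m : (0 < m)%N ->
  Eperm (fun s : 'S_m => (n_picks (sweep_plan s))%:R : R) = m%:R + harmonic_number R m - 2.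
Proof.
move=> m0; rewrite /Eperm card_Sn /n_picks -natr_sum.
have := @sum_picks m m0; rewrite -(Cm m) => /(congr1 (fun n => n%:R : R)).
rewrite !natrD !natrM (@Cs_closed m m (leqnn m)).1 subrr add0r => e.
have f0 : (m`!%:R : R) != 0 by rewrite pnatr_eq0 -lt0n fact_gt0.
set X := (\sum_(s : {perm _}) _)%:R in e *.
have -> : X = m%:R * m`!%:R + m`!%:R * harmonic_number R m - 2 * m`!%:R.
  by move: e; lra.
by field.
Qed.

Lemma sum_Dist m : (0 < m)%N ->
  (3 * \sum_(s : {perm 'I_m}) Dist s = m`! * (m.-1 * m.+1))%N.
Proof.
move=> m0; have h := sum_dist m.
have e : (\sum_(z : 'I_m) \sum_(y : 'I_m) cdist z y = \sum_(0 <= x < m) \sum_(0 <= y < m) cdist x y)%N.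
  by rewrite big_mkord; apply: eq_bigr => z _; rewrite big_mkord.
rewrite e in h; have h2 := cdist_sum m.
apply/eqP; rewrite -(eqn_pmul2r m0); apply/eqP.
move: h h2; rewrite /Dist.
set A := (\sum_(s : {perm 'I_m}) _)%N; set B := (\sum_(0 <= x < m) _)%N; set F := m`!.
move=> h h2; clearbody A B F; nia.
Qed.

Lemma sum_travel_bounds m : (0 < m)%N ->
  (m`! * (m.-1 * m.+1) <= 3 * \sum_(s : {perm 'I_m}) travel (sweep_plan s)
   <= m`! * (m.-1 * m.+1) + 6 * m * m`!)%N.
Proof.
move=> m0; rewrite -(@sum_Dist m m0).
have lo : (\sum_(s : {perm 'I_m}) Dist s <= \sum_(s : {perm 'I_m}) travel (sweep_plan s))%N.
  by apply: leq_sum => s _; have /andP [] := @plan_travel m s m0.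
have up : (\sum_(s : {perm 'I_m}) travel (sweep_plan s) <= \sum_(s : {perm 'I_m}) (Dist s + 2 * m))%N.
  by apply: leq_sum => s _; have /andP [] := @plan_travel m s m0.
rewrite big_split /= sum_nat_const (_ : #|_| = m`!) in up; last first.
  by rewrite -card_Sn; apply: eq_card.
move: lo up; set A := (\sum_(s : {perm 'I_m}) Dist s)%N.
set T := (\sum_(s : {perm 'I_m}) _)%N; set F := m`!.
move=> lo up; clearbody A T F; apply/andP; split; nia.
Qed.

Lemma ET_bound m : (0 < m)%N ->
  `|Eperm (fun s : 'S_m => (travel (sweep_plan s))%:R : R) - m%:R ^+ 2 / 3| <= 2 * m%:R.
Proof.
move=> m0; rewrite /Eperm card_Sn -natr_sum.
have /andP [lo up] := @sum_travel_bounds m m0.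
have f0 : (0 : R) < m`!%:R by rewrite ltr0n fact_gt0.
move: lo up; rewrite -!(ler_nat R) !natrD !natrM.
set T := (\sum_(s : {perm _}) _)%:R; set F := m`!%:R.
have em : (m.-1)%:R = m%:R - 1 :> R by rewrite -subn1 natrB.
rewrite em -natr1 => lo up.
have -> : T / F - m%:R ^+ 2 / 3 = (3 * T - (m%:R ^+ 2) * F) / (3 * F).
  by field; rewrite gt_eqF.
rewrite normf_div (gtr0_norm (x := 3 * F)) ?mulr_gt0 // ler_pdivrMr ?mulr_gt0 //.
have hF : 0 < F by [].
have hm : 1 <= m%:R :> R by rewrite ler1n.
have hmF : 0 <= (6 * m%:R - 1) * F by apply: mulr_ge0; lra.
rewrite ler_norml; apply/andP; split; nra.
Qed.

End Real.

Section Final.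
Variable R : realType.
Local Open Scope classical_set_scope.
Local Open Scope ring_scope.

Lemma cvg_one_bound (u : nat -> R) (K : R) : 0 <= K ->
  (forall n, (0 < n)%N -> `|u n - 1| <= K / n%:R) -> u @ \oo --> (1 : R).
Proof.
move=> K0 H; apply/cvgrPdist_le => e e0; near=> n.
rewrite distrC; apply: le_trans (H n _) _.
  by near: n; apply: nbhs_infty_gt.
have n0 : (0 < n%:R :> R) by rewrite ltr0n; near: n; apply: nbhs_infty_gt.
rewrite ler_pdivrMr // -ler_pdivrMl //.
have KE : 0 <= e^-1 * K by rewrite mulr_ge0 // invr_ge0 ltW.
apply: le_trans (ltW (archi_boundP KE)) _.
rewrite ler_nat; near: n; apply: nbhs_infty_ge.
Unshelve. all: by end_near. Qed.

Lemma ratio_bound (a e d : R) : 0 < e -> `|a - e| <= d -> `|a / e - 1| <= d / e.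
Proof.
move=> e0 h.
have -> : a / e - 1 = (a - e) / e by field; rewrite gt_eqF.
by rewrite normf_div (gtr0_norm e0) ler_pdivrMr // divfK ?gt_eqF.
Qed.

Lemma ratio_bound2 (A a e cp ct d : R) : 0 <= A -> 0 < cp -> 0 < ct -> 0 < e ->
  `|a - e| <= d -> `|(A * cp + a * ct) / (A * cp + e * ct) - 1| <= d / e.
Proof.
move=> A0 cp0 ct0 e0 h.
have Q0 : 0 < A * cp + e * ct.
  by apply: ltr_wpDl; [apply: mulr_ge0 => //; apply: ltW | apply: mulr_gt0].
have -> : (A * cp + a * ct) / (A * cp + e * ct) - 1 = ct * (a - e) / (A * cp + e * ct).
  by field; rewrite gt_eqF.
rewrite normf_div normrM (gtr0_norm ct0) (gtr0_norm Q0) ler_pdivrMr //.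
have E : d / e * (A * cp + e * ct) = d / e * (A * cp) + d * ct.
  by field; rewrite gt_eqF.
rewrite E.
have d0 : 0 <= d by apply: le_trans h.
have h1 : 0 <= d / e * (A * cp).
  by apply: mulr_ge0; [apply: divr_ge0 => //; apply: ltW | apply: mulr_ge0 => //; apply: ltW].
nra.
Qed.

Lemma Eperm_total m (cp ct : R) :
  Eperm (fun pi : 'S_m => total_cost cp ct (sweep_plan pi))
  = Eperm (fun pi : 'S_m => (n_picks (sweep_plan pi))%:R : R) * cp
    + Eperm (fun pi : 'S_m => (travel (sweep_plan pi))%:R : R) * ct.
Proof.
rewrite /Eperm /total_cost big_split /= -!mulr_suml mulrDl.
by congr (_ + _); rewrite mulrAC.
Qed.

End Final.

Local Open Scope classical_set_scope.
Local Open Scope ring_scope.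

Theorem proposition3 (R : realType) :
  (* expected number of pick-n-swaps is exactly m + H_m - 2 *)
  (forall m : nat, (0 < m)%N ->
     Eperm (fun pi : 'S_m => (n_picks (sweep_plan pi))%:R : R)
     = m%:R + @harmonic_number R m - 2)
  /\
  (* expected travel is (1 + o(1)) m^2 / 3 *)
  ((fun m : nat =>
      Eperm (fun pi : 'S_m => (travel (sweep_plan pi))%:R : R) / (m%:R ^+ 2 / 3))
     @ \oo --> (1 : R))
  /\
  (* hence T_LOR(m) ~ (m + H_m - 2) c_p + m^2 c_t / 3 *)
  (forall cp ct : R, 0 < cp -> 0 < ct ->
     (fun m : nat =>
        Eperm (fun pi : 'S_m => total_cost cp ct (sweep_plan pi))
        / ((m%:R + @harmonic_number R m - 2) * cp + m%:R ^+ 2 * ct / 3))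
       @ \oo --> (1 : R)).
Proof.
have key : forall n : nat, (0 < n)%N -> (2 * n%:R) / (n%:R ^+ 2 / 3) = 6 / n%:R :> R.
  by move=> n n0; field; rewrite pnatr_eq0 -lt0n.
have e0 : forall n : nat, (0 < n)%N -> 0 < n%:R ^+ 2 / 3 :> R.
  by move=> n n0; rewrite divr_gt0 // exprn_gt0 // ltr0n.
split; first by move=> m m0; exact: EP_eq.
split.
  apply: (@cvg_one_bound R _ 6) => // n n0.
  by rewrite -key //; apply: ratio_bound => //; [exact: e0 | exact: ET_bound].
move=> cp ct cp0 ct0.
apply: (@cvg_one_bound R _ 6) => // n n0.
rewrite Eperm_total EP_eq // -key // (mulrAC _ ct).
apply: ratio_bound2 => //; [|exact: e0|exact: ET_bound].
rewrite -EP_eq // /Eperm; apply: divr_ge0 => //.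
by apply: sumr_ge0 => s _.
Qed.
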